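(* Let $\mathcal{A}$ be the ring of adeles of $\mathbb{Q}$, with $\mathbb{Q}^*$ acting by multiplication via the diagonal embedding, and let $q:\mathcal{A}\to\mathcal{Q}(\mathcal{A}/\mathbb{Q}^* )$ be the quasi-orbit map. Then for $a\in\mathcal{A}$, the quasi-orbit $q(a)=\{b\in\mathcal{A}:\overline{\mathbb{Q}^*b}=\overline{\mathbb{Q}^*a}\}$ equals $\mathbb{Q}^*a$ if $a$ is invertible, and equals $\{b\in\mathcal{A}\setminus\mathcal{A}^*: \text{for all } p\in\mathcal{P}\cup\{\infty\},\ b_p=0 \iff a_p=0\}$ if $a$ is not invertible.
   Context: $\mathcal{P}$ is the set of primes. $\mathcal{A}=\mathcal{A}_f\times\mathbb{R}$ with $\mathcal{A}_f$ the restricted product of the $\mathbb{Q}_p$ with respect to the $\mathbb{Z}_p$; $\mathcal{A}$ has the product topology, componentwise operations, and $\mathbb{Q}$ embedded diagonally. Write $a=((a_p)_{p\in\mathcal{P}},a_\infty)$. $\mathcal{A}^*$ is the group of invertible adeles (all $a_p\ne0$, $a_\infty\ne0$, $a_p\in\mathbb{Z}_p^*$ for almost all $p$). The quasi-orbit space $\mathcal{Q}(\mathcal{A}/\mathbb{Q}^* )$ is the quotient of $\mathcal{A}$ by $a\sim b\iff\overline{\mathbb{Q}^*a}=\overline{\mathbb{Q}^*b}$. *)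

(* Defs.v *)
From HB Require Import structures.
From mathcomp Require Import all_boot all_order all_algebra.
From mathcomp Require Import reals.
Set Implicit Arguments. Unset Strict Implicit. Unset Printing Implicit Defensive.
Import Order.TTheory GRing.Theory Num.Theory.
Local Open Scope ring_scope.

(* [pZ p n r] : the rational r lies in p^n Z_(p), i.e. v_p(r) >= n          *)
Definition pZ (p n : nat) (r : rat) : Prop :=
  exists (a b : int), ~~ (p %| absz b)%N /\
    r = (p ^ n)%N%:R * a%:~R / b%:~R.

(* An element x of Q_p is represented by its family of closed balls
   x + p^n Z_p (n >= 0), intersected with the dense subfield Q: each
   [qp_ball x n] is a coset of p^n Z_(p) in Q, and the family is nested.
   (Nested families of such cosets correspond bijectively to points of the
   completion Q_p of Q for the p-adic absolute value.) *)
Record Qp (p : nat) := MkQp {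
  qp_ball : nat -> rat -> Prop;
  qp_coset : forall n, exists r, forall y, qp_ball n y <-> pZ p n (y - r);
  qp_nested : forall n y, qp_ball n.+1 y -> qp_ball n y
}.

Definition qp_is0 p (x : Qp p) : Prop :=
  forall n y, qp_ball x n y <-> pZ p n y.

(* x lies in the same coset of p^n Z_p as x', i.e. x - x' \in p^n Z_p. *)
Definition qp_close p (n : nat) (x x' : Qp p) : Prop :=
  forall y, qp_ball x n y <-> qp_ball x' n y.

Definition qp_int p (x : Qp p) : Prop :=
  forall y, qp_ball x 0 y <-> pZ p 0 y.

Definition qp_unit p (x : Qp p) : Prop :=
  qp_int x /\ ~ qp_ball x 1 0.

Definition qp_smul p (q : rat) (x y : Qp p) : Prop :=
  forall n r, qp_ball y n r <->
    (forall m, exists z, qp_ball x m z /\ pZ p n (r - q * z)).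

Definition prime_t := {p : nat | prime p}.

Record adele (R : realType) := MkAdele {
  ad_fin : forall p : prime_t, Qp (val p);
  ad_inf : R;
  ad_restricted : exists N : nat, forall p : prime_t,
      (N < val p)%N -> qp_int (ad_fin p)
}.

Definition ad_invertible (R : realType) (a : adele R) : Prop :=
  (forall p, ~ qp_is0 (ad_fin a p)) /\ ad_inf a != 0 /\
  exists N : nat, forall p : prime_t, (N < val p)%N -> qp_unit (ad_fin a p).

Definition ad_orbit (R : realType) (a b : adele R) : Prop :=
  exists q : rat, q != 0 /\
    (forall p : prime_t, qp_smul q (ad_fin a p) (ad_fin b p)) /\
    ad_inf b = ratr q * ad_inf a.

(* Basic neighbourhoods of b in A = A_f x R (restricted product topology on
   A_f, product topology on A): for a finite set F of primes, n in N and
   eps > 0,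
     { x | x_p - b_p \in p^n Z_p (p \in F), x_p - b_p \in Z_p (p \notin F),
           |x_inf - b_inf| < eps }.
   These form a neighbourhood basis at b. *)
Definition ad_nbhd (R : realType) (b : adele R) (F : seq prime_t) (n : nat)
    (eps : R) (x : adele R) : Prop :=
  (forall p, p \in F -> qp_close n (ad_fin x p) (ad_fin b p)) /\
  (forall p, p \notin F -> qp_close 0 (ad_fin x p) (ad_fin b p)) /\
  `|ad_inf x - ad_inf b| < eps.

Definition ad_closure (R : realType) (S : adele R -> Prop) (c : adele R) : Prop :=
  forall (F : seq prime_t) (n : nat) (eps : R), 0 < eps ->
    exists x, S x /\ ad_nbhd c F n eps x.

Definition quasi_orbit (R : realType) (a b : adele R) : Prop :=
  forall c, ad_closure (ad_orbit b) c <-> ad_closure (ad_orbit a) c.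

(* Main.v *)
Require Import Defs.
From HB Require Import structures.
From mathcomp Require Import all_boot all_order all_algebra.
From mathcomp Require Import reals.
From mathcomp Require Import ring lra zify.
From Stdlib Require Import Classical.
Import Order.TTheory GRing.Theory Num.Theory.
Local Open Scope ring_scope.
Set Implicit Arguments. Unset Strict Implicit.

Section PZ.
Variable p : nat.
Hypothesis pp : prime p.

Lemma ndvd_neq0 (b : int) : ~~ (p %| (absz b))%N -> b != 0.
Proof. by apply: contra => /eqP ->; rewrite dvdn0. Qed.

Lemma ndvdM (b b' : int) : ~~ (p %| (absz b))%N -> ~~ (p %| (absz b'))%N -> ~~ (p %| (absz (b * b')%R))%N.
Proof. by move=> h1 h2; rewrite abszM Euclid_dvdM // negb_or h1 h2. Qed.

Lemma natzR (n : nat) : ((n%:Z)%:~R : rat) = n%:R.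
Proof. by []. Qed.

Lemma p_neq1 : p != 1%N.
Proof. by apply/eqP => h; have := prime_gt1 pp; rewrite h. Qed.

Lemma ndvd1 : ~~ (p %| absz 1)%N.
Proof. rewrite /= dvdn1; apply/eqP => h; have := prime_gt1 pp; by rewrite h. Qed.

Lemma pXn0 n : ((p ^ n)%N%:R : rat) != 0.
Proof. by rewrite pnatr_eq0 -lt0n expn_gt0 prime_gt0. Qed.

Lemma pZ0 n : pZ p n 0.
Proof. exists 0, 1; split; first exact: ndvd1.
by rewrite mulr0 mul0r. Qed.

Lemma pZD n r s : pZ p n r -> pZ p n s -> pZ p n (r + s).
Proof.
move=> [a [b [hb ->]]] [a' [b' [hb' ->]]].
exists (a * b' + a' * b), (b * b'); split; first exact: ndvdM.
have := ndvd_neq0 hb; have := ndvd_neq0 hb'.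
rewrite -!(intr_eq0 rat) => h1 h2. rewrite !rmorphD !rmorphM /=. by field; rewrite h1 h2.
Qed.

Lemma pZN n r : pZ p n r -> pZ p n (- r).
Proof. move=> [a [b [hb ->]]]; exists (- a), b; split => //.
by rewrite rmorphN /= mulrN mulNr. Qed.

Lemma pZB n r s : pZ p n r -> pZ p n s -> pZ p n (r - s).
Proof. by move=> h1 h2; apply: pZD => //; apply: pZN. Qed.

Lemma pZ_le m n r : (m <= n)%N -> pZ p n r -> pZ p m r.
Proof.
move=> hmn [a [b [hb ->]]]; exists ((p ^ (n - m))%N%:Z * a), b; split => //.
rewrite rmorphM /= -(subnKC hmn) expnD natrM; rewrite (subnKC hmn).
rewrite -[((p ^ (n - m))%N%:Z)%:~R]/(((p ^ (n - m))%N)%:R : rat).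
by rewrite -!mulrA.
Qed.

Lemma pZM n m r s : pZ p n r -> pZ p m s -> pZ p (n + m) (r * s).
Proof.
move=> [a [b [hb ->]]] [a' [b' [hb' ->]]].
exists (a * a'), (b * b'); split; first exact: ndvdM.
rewrite expnD natrM !rmorphM /=.
have := ndvd_neq0 hb; have := ndvd_neq0 hb'.
rewrite -!(intr_eq0 rat) => h1 h2. by field; rewrite h1 h2.
Qed.

Lemma pZ_int (z : int) : pZ p 0 z%:~R.
Proof. exists z, 1; split; first exact: ndvd1.
by rewrite expn0 mul1r divr1. Qed.

Lemma pZ_nat (k : nat) : pZ p 0 k%:R.
Proof. by have := pZ_int k. Qed.

Lemma pZ_pow n : pZ p n (p ^ n)%N%:R.
Proof. exists 1, 1; split; first exact: ndvd1.
by rewrite mulr1 divr1. Qed.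

Lemma pZ_divX n k r : pZ p (n + k) r -> pZ p n (r / (p ^ k)%N%:R).
Proof.
move=> [a [b [hb ->]]]; exists a, b; split => //.
rewrite expnD natrM. have := pXn0 k. have : b%:~R != 0 :> rat by rewrite intr_eq0 (ndvd_neq0 hb).
move=> h1 h2; field; rewrite ?h1 ?h2 //.
Qed.

Lemma pZ_mulX n k r : pZ p n r -> pZ p (n + k) (r * (p ^ k)%N%:R).
Proof. by move=> h; apply: (pZM h (pZ_pow k)). Qed.

Lemma pZ_shift c K n s : pZ p 0 (c * (p ^ K)%N%:R) -> pZ p (n + K) s -> pZ p n (c * s).
Proof.
move=> hc hs. have := pZM hc (pZ_divX hs); rewrite add0n.
by have := pXn0 K => h; congr pZ; field.
Qed.

Lemma pZ_mul0 c n s : pZ p 0 c -> pZ p n s -> pZ p n (c * s).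
Proof. by move=> hc hs; have := pZM hc hs; rewrite add0n. Qed.


Lemma pZ_char n r : pZ p n r <->
  r = 0 \/ ((p ^ n %| absz (numq r)) && ~~ (p %| absz (denq r)))%N.
Proof.
split.
  move=> [a [b [hb hr]]]; case: (eqVneq r 0) => [->|r0]; [by left|right].
  have hb0 := ndvd_neq0 hb.
  set m := numq r; set d := denq r.
  have E0 : m%:~R = r * d%:~R :> rat := numqE r.
  rewrite hr in E0.
  have E : m * b = (p ^ n)%N%:Z * a * d.
    apply: (@intr_inj rat); rewrite !rmorphM /= E0.
    have : b%:~R != 0 :> rat by rewrite intr_eq0.
    move=> h; field; rewrite ?h //.
  have EA : (absz m * absz b = p ^ n * absz a * absz d)%N.
    by rewrite -abszM E !abszM.
  apply/andP; split.
    have cop : coprime (p ^ n) (absz b) by rewrite coprimeXl // prime_coprime.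
    by rewrite -(Gauss_dvdl _ cop) EA -mulnA dvdn_mulr.
  apply: contra hb => hd.
  have cop : coprime (absz d) (absz m) by rewrite coprime_sym coprime_num_den.
  have : (absz d %| absz m * absz b)%N by rewrite EA dvdn_mull.
  by rewrite (Gauss_dvdr _ cop) => /(dvdn_trans hd).
case=> [->|/andP [h1 h2]]; first exact: pZ0.
exists (numq r %/ (p ^ n)%N%:Z)%Z, (denq r); split => //.
have hdz : ((p ^ n)%N%:Z %| numq r)%Z by rewrite dvdzE absz_nat.
rewrite -[r in LHS]divq_num_den -{1}(divzK hdz) rmorphM /=.
by rewrite [X in X / _ = _]mulrC.
Qed.

Lemma den_fact r : exists m j, ~~ (p %| m)%N /\ denq r = (m * p ^ j)%N%:Z.
Proof.
have dpos : (0 < absz (denq r))%N by rewrite absz_gt0 gt_eqF // denq_gt0.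
case: (pfactor_coprime pp dpos) => m cop E.
exists m, (logn p (absz (denq r))); split; first by rewrite -prime_coprime.
by rewrite -E gtz0_abs // denq_gt0.
Qed.

Lemma rat_den r m j : denq r = (m * p ^ j)%N%:Z ->
  r = (numq r)%:~R / (m%:R * (p ^ j)%N%:R).
Proof. by move=> E; rewrite -[r in LHS]divq_num_den E -natrM. Qed.

Lemma pZ_bound r : exists K, pZ p 0 (r * (p ^ K)%N%:R).
Proof.
have [m [j [hm E]]] := den_fact r.
exists j, (numq r), m; split => //.
have m0 : (m%:R : rat) != 0 by rewrite pnatr_eq0; apply: contraNneq hm => ->; rewrite dvdn0.
rewrite {1}(rat_den E) expn0 mul1r.
have := pXn0 j => h. by field; rewrite m0 h.
Qed.

Lemma pZ_inv M z : ~ pZ p M z -> pZ p 1 ((p ^ M)%N%:R / z).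
Proof.
rewrite pZ_char => hz.
have z0 : z != 0 by apply/eqP => e; apply: hz; left.
have nz : numq z != 0 by rewrite numq_eq0.
have hn : ~~ ((p ^ M %| absz (numq z)) && ~~ (p %| absz (denq z)))%N
  by apply/negP => h; apply: hz; right.
have hdz : (0 < denq z) := denq_gt0 z.
rewrite -[z in _ / z]divq_num_den invfM invrK.
case hd: (p %| absz (denq z))%N.
  have hm : ~~ (p %| absz (numq z))%N.
    apply/negP => hm; have := coprime_num_den z.
    rewrite /coprime => /eqP g1.
    have : (p %| gcdn (absz (numq z)) (absz (denq z)))%N by rewrite dvdn_gcd hm hd.
    by rewrite g1 dvdn1 (negbTE p_neq1).
  have [d1 hd1] : exists d1, absz (denq z) = (d1 * p)%N by exists (absz (denq z) %/ p)%N; rewrite divnK.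
  have Ed : denq z = (d1 * p)%N%:Z by rewrite -hd1 gtz0_abs.
  exists ((p ^ M)%N%:Z * d1%:Z), (numq z); split => //.
  rewrite Ed rmorphM /= expn1 !natzR.
  have : (numq z)%:~R != 0 :> rat by rewrite intr_eq0.
  move=> h; rewrite natrM; field; rewrite h //.
have hM : ~~ (p ^ M %| absz (numq z))%N by move: hn; rewrite hd andbT.
have npos : (0 < absz (numq z))%N by rewrite absz_gt0.
case: (pfactor_coprime pp npos) => u cop E.
set j := logn p (absz (numq z)) in E.
have jM : (j < M)%N.
  rewrite ltnNge; apply: contra hM => hjM; rewrite E; apply: dvdn_mull; exact: dvdn_exp2l.
have hdz' : ((p ^ j)%N%:Z %| numq z)%Z by rewrite dvdzE absz_nat E dvdn_mull.
set u' := (numq z %/ (p ^ j)%N%:Z)%Z.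
have Eu : numq z = u' * (p ^ j)%N%:Z by rewrite divzK.
have hu : absz u' = u.
  have pj0 : (0 < p ^ j)%N by rewrite expn_gt0 prime_gt0.
  by apply/eqP; rewrite -(eqn_pmul2r pj0) -E Eu abszM.
have u0 : u' != 0 by apply: contraTneq npos => e; rewrite Eu e mul0r.
exists ((p ^ (M - j).-1)%N%:Z * denq z)%R; exists u'; split; first by rewrite hu -(prime_coprime _ pp).
rewrite Eu !rmorphM /=.
have EM : (p ^ M = p ^ 1 * p ^ (M - j).-1 * p ^ j)%N.
  by rewrite -!expnD; congr (_ ^ _)%N; rewrite add1n prednK ?subn_gt0 // subnK // ltnW.
rewrite EM !natrM.
have : u'%:~R != 0 :> rat by rewrite intr_eq0.
have := pXn0 j.
move=> h1 h2; field; rewrite h1 h2 //.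
Qed.

Lemma zinv_approx s E : exists h, pZ p E (h - s) /\
  forall l, prime l -> l != p -> pZ l 0 h.
Proof.
have [m [j [hm Ed]]] := den_fact s.
have cop : coprimez m%:Z (p ^ (E + j))%N%:Z.
  by rewrite coprimezE !absz_nat coprime_sym coprimeXl // prime_coprime.
have [[u v] /= Huv] := coprimezP _ _ cop.
exists ((numq s * u)%:~R / (p ^ j)%N%:R); split.
  exists (- (numq s * v)), m%:Z; split => //.
  rewrite {2}(rat_den Ed).
  have m0 : (m%:R : rat) != 0 by rewrite pnatr_eq0; apply: contraNneq hm => ->; rewrite dvdn0.
  have Huv' : (u%:~R * m%:R + v%:~R * (p ^ (E + j))%N%:R = 1 :> rat).
    by have := congr1 (fun x : int => x%:~R : rat) Huv; rewrite rmorphD !rmorphM /=.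
  have Hu : (u%:~R : rat) = (1 - v%:~R * (p ^ (E + j))%N%:R) / m%:R.
    move: Huv' m0; move: (u%:~R : rat) (v%:~R : rat) (m%:R : rat) ((p ^ (E + j))%N%:R : rat).
    by move=> U V Mm P H Mm0; rewrite -H; field.
  rewrite rmorphM /= Hu expnD natrM rmorphN rmorphM /=.
  have := pXn0 j; have := pXn0 E.
  move=> h1 h2; field; by rewrite ?m0 ?h1 ?h2.
move=> l pl lp; exists (numq s * u), (p ^ j)%N%:Z; split.
  rewrite absz_nat Euclid_dvdX // dvdn_prime2 // (negbTE lp) //.
by rewrite expn0 mul1r.
Qed.

End PZ.

Lemma pZ_int_all r : (forall l, prime l -> pZ l 0 r) -> r = (numq r)%:~R.
Proof.
move=> h.
have d1 : denq r = 1.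
  have dpos : (0 < absz (denq r))%N by rewrite absz_gt0 gt_eqF // denq_gt0.
  case: (ltnP 1 (absz (denq r))) => [lt1|le1].
    have pl := pdiv_prime lt1.
    have := proj1 (pZ_char pl 0 r) (h _ pl); case=> [r0|/andP [_ nd]].
      by move: lt1; rewrite r0.
    by rewrite pdiv_dvd in nd.
  have e : absz (denq r) = 1%N by apply/eqP; rewrite eqn_leq le1.
  by rewrite -[denq r]gtz0_abs ?denq_gt0 // e.
by rewrite numqE d1 mulr1.
Qed.



Section QP.
Variable p : nat.
Hypothesis pp : prime p.
Implicit Types x w : Qp p.

Lemma ball_ex x n : exists r, qp_ball x n r.
Proof. have [r hr] := qp_coset x n; exists r; apply/hr; rewrite subrr; exact: pZ0. Qed.

Lemma ball_diff x n (y y' : rat) : qp_ball x n y -> qp_ball x n y' -> pZ p n (y - y').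
Proof.
have [r hr] := qp_coset x n => /hr h1 /hr h2.
have -> : y - y' = (y - r) - (y' - r) by ring.
exact: pZB.
Qed.

Lemma ball_shift x n (y y' : rat) : qp_ball x n y -> pZ p n (y' - y) -> qp_ball x n y'.
Proof.
have [r hr] := qp_coset x n => /hr h1 h2; apply/hr.
have -> : y' - r = (y' - y) + (y - r) by ring.
exact: pZD.
Qed.

Lemma ball_iff x n (z y : rat) : qp_ball x n z -> (qp_ball x n y <-> pZ p n (y - z)).
Proof.
move=> hz; split; first by move=> hy; exact: (ball_diff hy hz).
by move=> h; apply: ball_shift hz h.
Qed.

Lemma ball_le x m n (y : rat) : (m <= n)%N -> qp_ball x n y -> qp_ball x m y.
Proof.
move=> /subnK <-; elim: (n - m)%N => [|k IH] //= h.
by apply: IH; apply: qp_nested; rewrite -addSn.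
Qed.

Lemma is0_ball x : qp_is0 x -> forall n, qp_ball x n 0.
Proof. by move=> h n; apply/h; apply: pZ0. Qed.

Lemma ball_is0 x : (forall n, qp_ball x n 0) -> qp_is0 x.
Proof. move=> h n y; rewrite (ball_iff _ (h n)) subr0 //. Qed.

Lemma close_le (x x' : Qp p) m n : (m <= n)%N -> qp_close n x x' -> qp_close m x x'.
Proof.
move=> hmn hc y; have [w hw] := ball_ex x n.
have hw' : qp_ball x' n w by apply/hc.
rewrite (ball_iff _ (ball_le hmn hw)) (ball_iff _ (ball_le hmn hw')) //.
Qed.

Lemma close_sym n (x x' : Qp p) : qp_close n x x' -> qp_close n x' x.
Proof. by move=> h y; rewrite h. Qed.

Lemma close_trans n (x x' x'' : Qp p) : qp_close n x x' -> qp_close n x' x'' -> qp_close n x x''.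
Proof. by move=> h h' y; rewrite h h'. Qed.

Lemma smul_formula q x K n z r : pZ p 0 (q * (p ^ K)%N%:R) -> qp_ball x (n + K) z ->
  ((forall m, exists z', qp_ball x m z' /\ pZ p n (r - q * z')) <-> pZ p n (r - q * z)).
Proof.
move=> hq hz; split.
  move=> /(_ (n + K)%N) [z' [hz' h]].
  have -> : r - q * z = (r - q * z') + q * (z' - z) by ring.
  by apply: pZD => //; apply: (pZ_shift pp hq); apply: ball_diff hz' hz.
move=> h m; have [z' hz'] := ball_ex x (maxn m (n + K)).
exists z'; split; first by apply: ball_le hz'; rewrite leq_maxl.
have -> : r - q * z' = (r - q * z) + q * (z - z') by ring.
apply: pZD => //; apply: (pZ_shift pp hq); apply: ball_diff hz _.
by apply: ball_le hz'; rewrite leq_maxr.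
Qed.

Lemma smul_ball q x (y : Qp p) K n z r : qp_smul q x y -> pZ p 0 (q * (p ^ K)%N%:R) ->
  qp_ball x (n + K) z -> (qp_ball y n r <-> pZ p n (r - q * z)).
Proof. move=> hs hq hz; apply: iff_trans (hs n r) _; exact: smul_formula _ hq hz. Qed.

Lemma smul_of q x (y : Qp p) : (forall n, exists K z, pZ p 0 (q * (p ^ K)%N%:R) /\
   qp_ball x (n + K) z /\ forall r, (qp_ball y n r <-> pZ p n (r - q * z))) ->
  qp_smul q x y.
Proof.
move=> h n r; have [K [z [hq [hz hr]]]] := h n.
apply: iff_trans (hr r) _; apply: iff_sym; exact: smul_formula _ hq hz.
Qed.

Definition smul_ball_def q x n r :=
  forall m, exists z, qp_ball x m z /\ pZ p n (r - q * z).

Lemma smul_coset q x n : exists r0, forall y, smul_ball_def q x n y <-> pZ p n (y - r0).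
Proof.
have [K hK] := pZ_bound pp q.
have [z hz] := ball_ex x (n + K).
exists (q * z) => y; exact: smul_formula _ hK hz.
Qed.

Lemma smul_nested q x n y : smul_ball_def q x n.+1 y -> smul_ball_def q x n y.
Proof.
move=> h m; have [z [hz h']] := h m; exists z; split => //.
exact: (pZ_le (leqnSn n) h').
Qed.

Definition smulQ q x : Qp p := MkQp (smul_coset q x) (@smul_nested q x).

Lemma smulQ_spec q x : qp_smul q x (smulQ q x).
Proof. by []. Qed.

Lemma smul1 x : qp_smul 1 x x.
Proof.
apply: smul_of => n; have [z hz] := ball_ex x (n + 0).
exists 0%N, z; split; first by rewrite mul1r expn0; apply: (pZ_nat pp 1).
split => // r; rewrite mul1r; apply: ball_iff; by rewrite addn0 in hz.
Qed.


Lemma smul_comp q q' x (y : Qp p) w : qp_smul q x y -> qp_smul q' y w -> qp_smul (q' * q) x w.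
Proof.
move=> h1 h2; apply: smul_of => n.
have [K hK] := pZ_bound pp q; have [K' hK'] := pZ_bound pp q'.
have [z hz] := ball_ex x (n + K' + K).
exists (K' + K)%N, z; split.
  have := pZM pp hK' hK; rewrite add0n expnD natrM => h.
  by have -> : q' * q * ((p ^ K')%N%:R * (p ^ K)%N%:R) = q' * (p ^ K')%N%:R * (q * (p ^ K)%N%:R) by ring.
split; first by rewrite addnA.
have hy : qp_ball y (n + K') (q * z) by rewrite (smul_ball _ h1 hK hz) subrr; apply: pZ0.
by move=> r; rewrite (smul_ball _ h2 hK' hy) mulrA.
Qed.

Lemma smul_inv q x (y : Qp p) : q != 0 -> qp_smul q x y -> qp_smul q^-1 y x.
Proof.
move=> q0 h; apply: smul_of => n.
have [K hK] := pZ_bound pp q; have [K' hK'] := pZ_bound pp q^-1.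
have [z hz] := ball_ex x (n + K' + K).
have hy : qp_ball y (n + K') (q * z) by rewrite (smul_ball _ h hK hz) subrr; apply: pZ0.
exists K', (q * z); split => //; split => // r.
rewrite mulrA mulVf // mul1r; apply: ball_iff.
by apply: ball_le hz; rewrite -addnA leq_addr.
Qed.

Lemma smul_is0 q x (y : Qp p) : qp_is0 x -> qp_smul q x y -> qp_is0 y.
Proof.
move=> h0 h; apply: ball_is0 => n.
have [K hK] := pZ_bound pp q.
by rewrite (smul_ball _ h hK (is0_ball h0 _)) mulr0 subr0; apply: pZ0.
Qed.

Lemma smul_is0_rev q x (y : Qp p) : q != 0 -> qp_smul q x y -> qp_is0 y -> qp_is0 x.
Proof. by move=> q0 h h0; apply: (smul_is0 h0 (smul_inv q0 h)). Qed.

Lemma smul_int q x (y : Qp p) : pZ p 0 q -> qp_int x -> qp_smul q x y -> qp_int y.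
Proof.
move=> hq hx h r.
have hq' : pZ p 0 (q * (p ^ 0)%N%:R) by rewrite expn0 mulr1.
have hz : qp_ball x (0 + 0) 0 by apply/hx; apply: pZ0.
by rewrite (smul_ball _ h hq' hz) mulr0 subr0.
Qed.

Lemma smul_unit q x (y : Qp p) : q != 0 -> pZ p 0 q -> pZ p 0 q^-1 -> qp_unit x ->
  qp_smul q x y -> qp_unit y.
Proof.
move=> q0 hq hqi [hx hx1] h; split; first exact: smul_int hq hx h.
move=> hy; apply: hx1.
have hq' : pZ p 0 (q * (p ^ 0)%N%:R) by rewrite expn0 mulr1.
have [z hz] := ball_ex x (1 + 0).
move: hy; rewrite (smul_ball _ h hq' hz) sub0r => /pZN; rewrite opprK => hqz.
have := pZ_mul0 pp hqi hqz; rewrite mulrA mulVf // mul1r => hz1.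
apply: ball_shift hz _; rewrite sub0r; exact: pZN.
Qed.

End QP.

Lemma pZ0_small p q : prime p -> (absz (denq q) < p)%N -> pZ p 0 q.
Proof.
move=> pp hd; apply/(pZ_char pp); right; rewrite expn0 dvd1n /=.
apply/negP => /dvdn_leq; rewrite absz_gt0 gt_eqF ?denq_gt0 // => /(_ isT).
by rewrite leqNgt hd.
Qed.

Lemma pZ0_inv_small p q : prime p -> (absz (numq q) < p)%N -> q != 0 -> pZ p 0 q^-1.
Proof.
move=> pp hn q0; exists (denq q), (numq q); split.
  apply/negP => /dvdn_leq; rewrite absz_gt0 numq_eq0 q0 => /(_ isT).
  by rewrite leqNgt hn.
by rewrite -[q in LHS]divq_num_den invfM invrK expn0 mul1r mulrC.
Qed.

Lemma small_eq0 (R : realType) (r : R) : (forall e, 0 < e -> `|r| < e) -> r = 0.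
Proof.
move=> h; case: (eqVneq r 0) => // r0.
by have := h `|r|; rewrite normr_gt0 r0 ltxx => /(_ isT).
Qed.

Section Adele.
Variable R : realType.
Implicit Types a b c x : adele R.

Definition ppr (p : prime_t) : prime (val p) := valP p.

Lemma smulA_restr q a : exists N : nat, forall p : prime_t,
   (N < val p)%N -> qp_int (smulQ (ppr p) q (ad_fin a p)).
Proof.
have [N hN] := ad_restricted a.
exists (N + absz (denq q))%N => p hp.
apply: (smul_int (ppr p)) (smulQ_spec _ _ _).
  apply: pZ0_small (ppr p) _; apply: leq_ltn_trans hp; exact: leq_addl.
apply: hN; apply: leq_ltn_trans hp; exact: leq_addr.
Qed.

Definition smulA q a : adele R :=
  @MkAdele R (fun p => smulQ (ppr p) q (ad_fin a p)) (ratr q * ad_inf a) (smulA_restr q a).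

Lemma orbit_smulA q a : q != 0 -> ad_orbit a (smulA q a).
Proof. move=> q0; exists q; split => //; split => // p; exact: smulQ_spec. Qed.

Lemma orbit_refl a : ad_orbit a a.
Proof.
exists 1; split; first exact: oner_neq0.
split; last by rewrite rmorph1 mul1r.
move=> p; exact: (smul1 (ppr p)).
Qed.

Lemma orbit_trans a b c : ad_orbit a b -> ad_orbit b c -> ad_orbit a c.
Proof.
move=> [q [q0 [h1 e1]]] [q' [q0' [h2 e2]]].
exists (q' * q); split; first by rewrite mulf_neq0.
split; last by rewrite e2 e1 rmorphM mulrA.
move=> p; exact: (smul_comp (ppr p) (h1 p) (h2 p)).
Qed.

Lemma orbit_sym a b : ad_orbit a b -> ad_orbit b a.
Proof.
move=> [q [q0 [h1 e1]]].
exists q^-1; split; first by rewrite invr_eq0.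
split; last by rewrite e1 fmorphV mulrA mulVf ?mul1r // fmorph_eq0.
move=> p; exact: (smul_inv (ppr p) q0 (h1 p)).
Qed.

Lemma nbhd_refl c F n eps : 0 < eps -> ad_nbhd c F n eps c.
Proof. by move=> he; split; [|split] => // *; rewrite subrr normr0. Qed.

Lemma closure_self (S : adele R -> Prop) c : S c -> ad_closure S c.
Proof. by move=> h F n eps he; exists c; split => //; apply: nbhd_refl. Qed.

Lemma closure_ext (S S' : adele R -> Prop) c : (forall x, S x -> S' x) ->
  ad_closure S c -> ad_closure S' c.
Proof.
move=> hS h F n eps he; have [x [hx hn]] := h F n eps he; exists x; split => //.
exact: hS.
Qed.

Lemma quasi_of_orbit a b : ad_orbit a b -> quasi_orbit a b.
Proof.
move=> h c; split; apply: closure_ext => x hx.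
  exact: orbit_trans h hx.
exact: orbit_trans (orbit_sym h) hx.
Qed.

Lemma inv_of_orbit a b : ad_orbit b a -> ad_invertible b -> ad_invertible a.
Proof.
move=> [q [q0 [h1 e1]]] [hb0 [hbi [N hN]]]; split; [|split].
- move=> p h0; apply: (hb0 p); exact: (smul_is0_rev (ppr p) q0 (h1 p) h0).
- by rewrite e1 mulf_neq0 // fmorph_eq0.
exists (N + absz (numq q) + absz (denq q))%N => p hp.
have hp1 : (absz (denq q) < val p)%N by apply: leq_ltn_trans hp; exact: leq_addl.
have hp2 : (absz (numq q) < val p)%N.
  by apply: leq_ltn_trans hp; rewrite -addnA addnC -addnA; exact: leq_addr.
have hp3 : (N < val p)%N by apply: leq_ltn_trans hp; rewrite -addnA; exact: leq_addr.
exact: (smul_unit (ppr p) q0 (pZ0_small (ppr p) hp1) (pZ0_inv_small (ppr p) hp2 q0) (hN p hp3) (h1 p)).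
Qed.

Definition Zset a c := (forall p, qp_is0 (ad_fin a p) -> qp_is0 (ad_fin c p)) /\
  (ad_inf a = 0 -> ad_inf c = 0).

Lemma closure_Z a c : ad_closure (ad_orbit a) c -> Zset a c.
Proof.
move=> h; split.
  move=> p h0 n y.
  have [x [[q [q0 [hx ex]]] [hF _]]] := h [:: p] n 1 ltr01.
  have hx0 := smul_is0 (ppr p) h0 (hx p).
  rewrite -(hF p (mem_head _ _)) hx0 //.
move=> a0; apply: small_eq0 => e he.
have [x [[q [q0 [hx ex]]] [_ [_ hi]]]] := h [::] 0%N e he.
by move: hi; rewrite ex a0 mulr0 sub0r normrN.
Qed.

End Adele.

Lemma bound_mono p (pp : prime p) q K K' : pZ p 0 (q * (p ^ K)%N%:R) -> (K <= K')%N ->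
  pZ p 0 (q * (p ^ K')%N%:R).
Proof.
move=> h /subnK <-; rewrite addnC expnD natrM mulrA.
by apply: (pZ_mul0 pp h); apply: pZ_nat.
Qed.

Lemma smul_diff_int p (pp : prime p) q1 q2 (y x1 x2 : Qp p) L L' :
  qp_smul q1 y x1 -> qp_smul q2 y x2 -> qp_close L x1 x2 -> ~ qp_ball y L' 0 ->
  (L' <= L.+1)%N -> pZ p 0 (q1 - q2).
Proof.
move=> h1 h2 hc hy hL.
have [K1 hK1] := pZ_bound pp q1; have [K2 hK2] := pZ_bound pp q2.
have hq1 : pZ p 0 (q1 * (p ^ (K1 + K2.+1))%N%:R).
  by apply: (bound_mono pp hK1); apply: leq_addr.
have hq2 : pZ p 0 (q2 * (p ^ (K1 + K2.+1))%N%:R).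
  by apply: (bound_mono pp hK2); rewrite addnS; apply: leqW; apply: leq_addl.
have [z hz] := ball_ex pp y (L + (K1 + K2.+1)).
have b1 : qp_ball x1 L (q1 * z) by rewrite (smul_ball pp _ h1 hq1 hz) subrr; apply: pZ0.
have : qp_ball x2 L (q1 * z) by apply/hc.
rewrite (smul_ball pp _ h2 hq2 hz) -mulrBl => hd.
have nz : ~ pZ p L' z.
  move=> hz'; apply: hy; apply: (ball_shift pp (ball_le _ hz)).
    by apply: leq_trans hL _; rewrite -addn1 leq_add2l addnS ltn0Sn.
  by rewrite sub0r; apply: pZN.
apply: NNPP => hn; apply: nz.
have := pZ_inv pp hn; rewrite expn0 mul1r => hi.
have := pZM pp hi hd.
case: (eqVneq (q1 - q2) 0) => [e|d0]; first by move: hn; rewrite e; case; apply: pZ0.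
rewrite mulrA mulVf // mul1r => h; exact: pZ_le h.
Qed.

Lemma nonzero_level p (pp : prime p) (x : Qp p) : ~ qp_is0 x -> exists M, ~ qp_ball x M 0.
Proof.
move=> hx; apply: NNPP => h; apply: hx; apply: (ball_is0 pp) => n.
by apply: NNPP => hn; apply: h; exists n.
Qed.

Definition Gs (B : nat) : seq prime_t := pmap insub (iota 0 B.+1).

Lemma mem_Gs B (p : prime_t) : (p \in Gs B) = (val p <= B)%N.
Proof. by rewrite mem_pmap_sub mem_iota leq0n /= add0n ltnS. Qed.

Definition mkp (l : nat) (pl : prime l) : prime_t := exist _ l pl.

Section Closed.
Variable R : realType.
Implicit Types a b c x : adele R.

Lemma levels a B : (forall p, ~ qp_is0 (ad_fin a p)) ->
  exists n, forall p : prime_t, (val p <= B)%N -> ~ qp_ball (ad_fin a p) n 0.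
Proof.
move=> h0; elim: B => [|B [n0 IH]].
  exists 0%N => p; rewrite leqn0 => /eqP e; have := prime_gt0 (ppr p); by rewrite [X in (0 < X)%N]e.
case: (boolP (prime B.+1)) => hB; last first.
  exists n0 => p hp; apply: IH; move: hp; rewrite leq_eqVlt ltnS => /orP [/eqP e|//].
  by move: hB; rewrite -e (ppr p).
have [M hM] := nonzero_level hB (h0 (mkp hB)).
exists (maxn n0 M) => p hp hb.
move: hp; rewrite leq_eqVlt ltnS => /orP [/eqP e|hp].
  have ep : p = mkp hB by apply: val_inj.
  subst p; apply: hM; apply: ball_le hb; exact: leq_maxr.
by apply: (IH p hp); apply: ball_le hb; exact: leq_maxl.
Qed.

Lemma nbhd_weaken c F F' n n' e e' x : ad_nbhd c F' n' e' x -> (n <= n')%N -> e' <= e ->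
  {subset F <= F'} -> ad_nbhd c F n e x.
Proof.
move=> [h1 [h2 h3]] hn he hF; split; [|split].
- move=> p hp; apply: (close_le (ppr p) hn); exact: h1 (hF _ hp).
- move=> p hp; case: (boolP (p \in F')) => hp'; last exact: h2.
  apply: (close_le (ppr p) (leq0n n')); exact: h1.
- exact: lt_le_trans h3 he.
Qed.

Lemma closed_orbit a c : ad_invertible a -> ad_closure (ad_orbit a) c -> ad_orbit a c.
Proof.
move=> [h0 [ai [N hN]]] hc.
have [n hn] := levels N h0.
set G := Gs N.
set e0 := `|ad_inf a| / 2.
have e0_gt0 : 0 < e0 by rewrite divr_gt0 // normr_gt0.
have U : forall x1 x2 q1 q2, (forall p, qp_smul q1 (ad_fin a p) (ad_fin x1 p)) ->
    ad_inf x1 = ratr q1 * ad_inf a -> ad_nbhd c G n e0 x1 ->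
    (forall p, qp_smul q2 (ad_fin a p) (ad_fin x2 p)) ->
    ad_inf x2 = ratr q2 * ad_inf a -> ad_nbhd c G n e0 x2 -> q1 = q2.
  move=> x1 x2 q1 q2 hs1 e1 [c1 [d1 r1]] hs2 e2 [c2 [d2 r2]].
  have hp : forall l, prime l -> pZ l 0 (q1 - q2).
    move=> l pl; set P := mkp pl.
    case: (boolP (P \in G)) => hP.
    - have cl : qp_close n (ad_fin x1 P) (ad_fin x2 P).
        exact: close_trans (c1 P hP) (close_sym (c2 P hP)).
      have hnP : ~ qp_ball (ad_fin a P) n 0 by apply: hn; rewrite -mem_Gs.
      exact: (smul_diff_int (ppr P) (hs1 P) (hs2 P) cl hnP (leqnSn n)).
    - have cl : qp_close 0 (ad_fin x1 P) (ad_fin x2 P).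
        exact: close_trans (d1 P hP) (close_sym (d2 P hP)).
      have hu : qp_unit (ad_fin a P) by apply: hN; rewrite ltnNge -mem_Gs.
      exact: (smul_diff_int (ppr P) (hs1 P) (hs2 P) cl (proj2 hu) (leqnn 1)).
  have ed := pZ_int_all hp.
  set z := numq (q1 - q2) in ed.
  have : `|ratr (q1 - q2) * ad_inf a| < `|ad_inf a|.
    have -> : ratr (q1 - q2) * ad_inf a = (ad_inf x1 - ad_inf c) - (ad_inf x2 - ad_inf c).
      by rewrite e1 e2 rmorphB /=; ring.
    apply: le_lt_trans (ler_normB _ _) _.
    have -> : `|ad_inf a| = e0 + e0 by rewrite /e0; field.
    by apply: ltrD.
  rewrite normrM -{2}[`|ad_inf a|]mul1r ltr_pM2r ?normr_gt0 // ed ratr_int -intr_norm.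
  rewrite -[1]/(1%:~R) ltr_int => hz.
  have z0 : z = 0 by lia.
  by apply/eqP; rewrite -subr_eq0 ed z0.
have [x0 [[q0 [q00 [hx0 ex0]]] hn0]] := hc G n e0 e0_gt0.
have Near : forall F n1 e, 0 < e -> exists x, (forall p, qp_smul q0 (ad_fin a p) (ad_fin x p)) /\
    ad_inf x = ratr q0 * ad_inf a /\ ad_nbhd c F n1 e x.
  move=> F n1 e he.
  have he' : 0 < Order.min e0 e by rewrite lt_min e0_gt0 he.
  have [x [[q [q0' [hx ex]]] hnb]] := hc (G ++ F) (maxn n n1) (Order.min e0 e) he'.
  have hG : ad_nbhd c G n e0 x.
    apply: nbhd_weaken hnb _ _ _; [exact: leq_maxl|by rewrite ge_min lexx|].
    by move=> p hp; rewrite mem_cat hp.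
  have qq : q = q0 by apply: (U x x0 q q0).
  subst q; exists x; split => //; split => //.
  apply: nbhd_weaken hnb _ _ _; [exact: leq_maxr|by rewrite ge_min lexx orbT|].
  by move=> p hp; rewrite mem_cat hp orbT.
exists q0; split => //; split.
  move=> p n1 r.
  have [x [hx [ex [hb _]]]] := Near [:: p] n1 1 ltr01.
  have cl := hb p (mem_head _ _).
  by rewrite -(cl r); apply: hx.
suff : ratr q0 * ad_inf a - ad_inf c = 0 by move/eqP; rewrite subr_eq0 => /eqP ->.
apply: small_eq0 => e he.
have [x [hx [ex [_ [_ hr]]]]] := Near [::] 0%N e he.
by rewrite -ex.
Qed.

End Closed.

Lemma pZ_congr p n (u v s : rat) : pZ p n (u - v) -> prime p -> (pZ p n (s - u) <-> pZ p n (s - v)).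
Proof.
move=> h pp; split => h'.
  have -> : s - v = (s - u) + (u - v) by ring.
  exact: pZD.
have -> : s - u = (s - v) - (u - v) by ring.
exact: pZB.
Qed.

Lemma target p (pp : prime p) (ap cp : Qp p) L : ~ qp_is0 ap ->
  exists t E, forall q, pZ p E (q - t) -> forall y, qp_smul q ap y -> qp_close L y cp.
Proof.
move=> h0.
have [M hM] := nonzero_level pp h0.
have [r hr] := ball_ex pp cp L.
have [W hW] := pZ_bound pp r.
have [z0 hz0] := ball_ex pp ap (L + (M + W)).
have [W' hW'] := pZ_bound pp z0.
have nz0 : ~ pZ p M z0.
  move=> h; apply: hM; apply: (ball_shift pp (ball_le _ hz0)).
    by rewrite addnA addnAC leq_addl.
  by rewrite sub0r; apply: pZN.
have z0n : z0 != 0 by apply/eqP => e; apply: nz0; rewrite e; apply: pZ0.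
have hinv : pZ p 0 ((p ^ M)%N%:R / z0) by apply: (pZ_le (leq0n 1)); apply: pZ_inv.
exists (r / z0), (L + W')%N => q hq y hy s.
have htK : pZ p 0 (r / z0 * (p ^ (M + W))%N%:R).
  have := pZ_mul0 pp hW hinv.
  have -> : r * (p ^ W)%N%:R * ((p ^ M)%N%:R / z0) = r / z0 * (p ^ (M + W))%N%:R.
    by rewrite expnD natrM; field.
  by [].
have hqK : pZ p 0 (q * (p ^ (M + W))%N%:R).
  have -> : q * (p ^ (M + W))%N%:R = r / z0 * (p ^ (M + W))%N%:R +
     (q - r / z0) * (p ^ (M + W))%N%:R by ring.
  apply: pZD => //; apply: (pZ_mul0 pp _ (pZ_nat pp (p ^ (M + W)))).
  exact: pZ_le (leq0n _) hq.
rewrite (smul_ball pp _ hy hqK hz0) (ball_iff pp _ hr).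
apply: pZ_congr => //.
have -> : q * z0 - r = z0 * (q - r / z0) by field.
have := pZ_shift pp hW' hq. by [].
Qed.

Lemma target_is0 p (pp : prime p) (ap cp : Qp p) L q y : qp_is0 ap -> qp_is0 cp ->
  qp_smul q ap y -> qp_close L y cp.
Proof.
move=> h0 hc hy r; have hy0 := smul_is0 pp h0 hy.
by rewrite hy0 hc.
Qed.

Lemma crt (Gd : prime_t -> rat -> Prop) (l : seq prime_t) : uniq l ->
  (forall p, p \in l -> exists t E, forall q, pZ (val p) E (q - t) -> Gd p q) ->
  exists q (P : nat), (0 < P)%N /\
   (forall p, p \in l -> forall e, pZ (val p) 0 e -> Gd p (q + P%:R * e)) /\
   (forall p : prime_t, p \notin l -> pZ (val p) 0 q /\ ~~ (val p %| P)%N).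
Proof.
elim: l => [|p l IH].
  move=> _ _; exists 0, 1%N; split => //; split => // p _; split; first by have := pZ0 (ppr p) 0.
  by rewrite dvdn1 (p_neq1 (ppr p)).
move=> /andP [pl ul] H.
have [q' [P [P0 [HG Hout]]]] := IH ul (fun p0 hp0 => H p0 (mem_behead (s := p :: l) hp0)).
have [t [E hE]] := H p (mem_head _ _).
have [pq' pP] := Hout p pl.
have P0' : (P%:R : rat) != 0 by rewrite pnatr_eq0 -lt0n.
have [h [hh hl]] := zinv_approx (ppr p) ((t - q') / P%:R) E.
exists (q' + P%:R * h), (P * val p ^ E)%N; split.
  by rewrite muln_gt0 P0 expn_gt0 prime_gt0 // (ppr p).
split.
  move=> p0; rewrite inE => /orP [/eqP ->|hp0] e he.
    apply: hE.
    have -> : q' + P%:R * h + (P * val p ^ E)%N%:R * e - t =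
       P%:R * (h - (t - q') / P%:R) + P%:R * ((val p ^ E)%N%:R * e).
      by rewrite natrM; field.
    apply: (pZD (ppr p)); apply: (pZ_mul0 (ppr p) (pZ_nat (ppr p) _)) => //.
    by have := pZM (ppr p) (pZ_pow (ppr p) E) he; rewrite addn0.
  have -> : q' + P%:R * h + (P * val p ^ E)%N%:R * e = q' + P%:R * (h + (val p ^ E)%N%:R * e).
    by rewrite natrM; ring.
  apply: HG => //; apply: (pZD (ppr p0)).
    apply: hl (ppr p0) _; apply: contraNneq pl => /val_inj e0.
    by rewrite -e0.
  by apply: (pZ_mul0 (ppr p0) (pZ_nat (ppr p0) _)).
move=> l0; rewrite inE negb_or => /andP [l0p l0l].
have [pq0 pP0] := Hout l0 l0l.
have vne : val l0 != val p by rewrite val_eqE.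
split.
  apply: (pZD (ppr l0) pq0); apply: (pZ_mul0 (ppr l0) (pZ_nat (ppr l0) _)).
  exact: hl (ppr l0) vne.
rewrite Euclid_dvdM ?(ppr l0) // negb_or pP0 /= Euclid_dvdX ?(ppr l0) //.
by rewrite dvdn_prime2 ?(ppr l0) ?(ppr p) // (negbTE vne).
Qed.

Lemma sum_ge (F : seq prime_t) p : p \in F -> (val p <= \sum_(x <- F) val x)%N.
Proof.
elim: F => // x F IH; rewrite inE big_cons => /orP [/eqP ->|h]; first exact: leq_addr.
exact: leq_trans (IH h) (leq_addl _ _).
Qed.

Lemma real_approx (R : realType) (A C h eps : R) : h != 0 -> `|h| < eps / 2 ->
  exists k : int, `|A + k%:~R * h - C| < eps /\ `|A + (k + 1)%:~R * h - C| < eps.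
Proof.
move=> h0 hh.
set y := (C - A) / h.
exists (Num.floor y).
have f1 := floor_le y; have f2 := floorD1_gt y.
set k := Num.floor y in f1 f2 *.
have E1 : A + k%:~R * h - C = h * (k%:~R - y) by rewrite /y; field.
have E2 : A + (k + 1)%:~R * h - C = h * ((k + 1)%:~R - y) by rewrite /y; field.
have heps : 0 < eps by have := le_lt_trans (normr_ge0 h) hh; lra.
rewrite E1 E2 !normrM; split.
  apply: le_lt_trans (_ : _ <= `|h| * 1) _; last by lra.
  apply: (ler_wpM2l (normr_ge0 h)); rewrite ler_norml; apply/andP; split; lra.
apply: le_lt_trans (_ : _ <= `|h| * 1) _; last by lra.
apply: (ler_wpM2l (normr_ge0 h)); rewrite ler_norml rmorphD /=; apply/andP; split; lra.
Qed.

Lemma close0_lemma p (pp : prime p) (ap cp y : Qp p) q K : qp_int cp ->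
  pZ p 0 (q * (p ^ K)%N%:R) -> qp_ball ap K 0 -> qp_smul q ap y -> qp_close 0 y cp.
Proof.
move=> hc hq ha hy r.
have ha' : qp_ball ap (0 + K) 0 by rewrite add0n.
rewrite (smul_ball pp _ hy hq ha') mulr0 subr0.
by rewrite hc.
Qed.

Lemma pZ_frac (p s : prime_t) (k : int) j : val p != val s ->
  pZ (val p) 0 (k%:~R / (val s ^ j)%N%:R).
Proof.
move=> ne; exists k, (val s ^ j)%N%:Z; split; last by rewrite expn0 mul1r.
rewrite absz_nat Euclid_dvdX ?(ppr p) // dvdn_prime2 ?(ppr p) ?(ppr s) //.
by rewrite (negbTE ne).
Qed.

Section Dense.
Variable R : realType.
Implicit Types a c : adele R.

Lemma assemble a c F n eps q B :
  (forall p : prime_t, p \in F -> (val p <= B)%N) ->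
  (forall p : prime_t, (B < val p)%N -> qp_int (ad_fin c p)) ->
  (forall p : prime_t, (val p <= B)%N -> forall y, qp_smul q (ad_fin a p) y -> qp_close n y (ad_fin c p)) ->
  (forall p : prime_t, (B < val p)%N -> exists K, pZ (val p) 0 (q * (val p ^ K)%N%:R) /\ qp_ball (ad_fin a p) K 0) ->
  `|ratr q * ad_inf a - ad_inf c| < eps ->
  ad_nbhd c F n eps (smulA q a).
Proof.
move=> hF hc hin hout hr; split; [|split] => //.
  move=> p hp; apply: hin (hF _ hp) _ _; exact: smulQ_spec.
move=> p hp; case: (leqP (val p) B) => hpB.
  apply: (close_le (ppr p) (leq0n n)); apply: hin hpB _ _; exact: smulQ_spec.
have [K [hK hb]] := hout p hpB.
by have := close0_lemma (ppr p) (hc p hpB) hK hb (smulQ_spec (ppr p) q (ad_fin a p)).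
Qed.

Lemma dense a c : ~ ad_invertible a -> Zset a c -> ad_closure (ad_orbit a) c.
Proof.
move=> ninv [Z1 Z2] F n eps he.
have [N0 hN0] := ad_restricted a; have [N1 hN1] := ad_restricted c.
set B := (N0 + N1 + \sum_(x <- F) val x)%N.
have hFB : forall p, p \in F -> (val p <= B)%N.
  by move=> p hp; apply: leq_trans (sum_ge hp) _; apply: leq_addl.
have hcB : forall p : prime_t, (B < val p)%N -> qp_int (ad_fin c p).
  move=> p hp; apply: hN1; apply: leq_ltn_trans hp.
  by rewrite /B -addnA addnCA; exact: leq_addr.
have haB : forall p : prime_t, (B < val p)%N -> qp_int (ad_fin a p).
  move=> p hp; apply: hN0; apply: leq_ltn_trans hp.
  by rewrite /B -addnA; exact: leq_addr.
set l := Gs B.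
have ul : uniq l := pmap_sub_uniq _ (iota_uniq 0 B.+1).
set Gd := fun (p : prime_t) (q : rat) => forall y, qp_smul q (ad_fin a p) y -> qp_close n y (ad_fin c p).
have hG : forall p, p \in l -> exists t E, forall q, pZ (val p) E (q - t) -> Gd p q.
  move=> p _; case: (classic (qp_is0 (ad_fin a p))) => h0.
    exists 0, 0%N => q _ y hy; exact: (target_is0 (ppr p) n h0 (Z1 p h0) hy).
  exact: target (ppr p) _ _ n h0.
have [q' [P [P0 [HG Hout]]]] := crt ul hG.
have inl : forall p : prime_t, (p \in l) = (val p <= B)%N := fun p => mem_Gs B p.
have finish : forall q, q != 0 -> (forall p, (val p <= B)%N -> Gd p q) ->
   (forall p : prime_t, (B < val p)%N -> exists K, pZ (val p) 0 (q * (val p ^ K)%N%:R) /\ qp_ball (ad_fin a p) K 0) ->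
   `|ratr q * ad_inf a - ad_inf c| < eps -> exists x, ad_orbit a x /\ ad_nbhd c F n eps x.
  move=> q q0 h1 h2 h3; exists (smulA q a); split; first exact: orbit_smulA.
  exact: assemble hFB hcB h1 h2 h3.
have Pq0 : (P%:R : rat) != 0 by rewrite pnatr_eq0 -lt0n.
have aint : forall p : prime_t, (B < val p)%N -> qp_ball (ad_fin a p) 0 0.
  by move=> p hp; apply/(haB p hp); have := pZ0 (ppr p) 0.
have q'out : forall p : prime_t, (B < val p)%N -> pZ (val p) 0 q'.
  by move=> p hp; case: (Hout p _) => //; rewrite inl -ltnNge.
case: (eqVneq (ad_inf a) 0) => ai.
  set e : int := if q' == 0 then 1 else 0.
  apply: (finish (q' + P%:R * e%:~R)).
  - rewrite /e; case: (eqVneq q' 0) => [->|h]; first by rewrite add0r mulr1.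
    by rewrite mulr0 addr0.
  - move=> p hp y hy.
    by apply: (HG p _ _ (pZ_int (ppr p) e)) hy; rewrite inl.
  - move=> p hp; exists 0%N; split; last exact: aint.
    rewrite expn0 mulr1; apply: (pZD (ppr p) (q'out p hp)).
    by apply: (pZ_mul0 (ppr p) (pZ_nat (ppr p) _)); apply: (pZ_int (ppr p)).
  - by rewrite ai mulr0 (Z2 ai) subrr normr0.
set X : R := 2 * P%:R * `|ad_inf a| / eps.
have X0 : 0 <= X by rewrite /X divr_ge0 ?mulr_ge0 ?ler0n ?normr_ge0 // ltW.
set m := Num.Def.archi_bound X.
have hm := archi_boundP X0.
have [s [j [j0 [hT hs]]]] : exists (s : prime_t) j, (0 < j)%N /\ X < (val s ^ j)%N%:R /\
    (qp_is0 (ad_fin a s) \/ ((B < val s)%N /\ qp_ball (ad_fin a s) 1 0 /\ j = 1%N)).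
  case: (classic (exists s, qp_is0 (ad_fin a s))) => [[s hs]|hnz].
    exists s, m.+1; split => //; split; last by left.
    apply: lt_trans hm _; rewrite ltr_nat.
    apply: leq_trans (leqnSn _) _; apply: ltn_expl; exact: prime_gt1 (ppr s).
  have nz : forall p, ~ qp_is0 (ad_fin a p) by move=> p hp; apply: hnz; exists p.
  have nu : ~ (exists N : nat, forall p : prime_t, (N < val p)%N -> qp_unit (ad_fin a p)).
    by move=> hu; apply: ninv; split => //; split.
  have [s hs] : exists s : prime_t, (B + m < val s)%N /\ ~ qp_unit (ad_fin a s).
    apply: NNPP => hh; apply: nu; exists (B + m)%N => p hp; apply: NNPP => hu.
    by apply: hh; exists p; split.
  case: hs => hs1 hs2.
  exists s, 1%N; split => //; split.
    apply: lt_trans hm _; rewrite expn1 ltr_nat; apply: leq_ltn_trans hs1; exact: leq_addl.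
  right; split; first by apply: leq_ltn_trans hs1; exact: leq_addr.
  split => //; apply: NNPP => hb; apply: hs2; split => //.
  apply: haB; apply: leq_ltn_trans hs1; exact: leq_addr.
set T := (val s ^ j)%N.
have Tpos : (0 < T)%N by rewrite expn_gt0 prime_gt0 // (ppr s).
have T0 : (T%:R : rat) != 0 by rewrite pnatr_eq0 -lt0n.
set h : R := ratr (P%:R / T%:R) * ad_inf a.
have hr : ratr (P%:R / T%:R) = (P%:R / T%:R : R) by rewrite fmorph_div /= !ratr_nat.
have h0 : h != 0.
  rewrite /h hr mulf_neq0 // mulf_neq0 // ?invr_eq0 pnatr_eq0 -lt0n //.
have hh : `|h| < eps / 2.
  have TR : (0 : R) < T%:R by rewrite ltr0n.
  rewrite /h hr normrM ger0_norm ?divr_ge0 ?ler0n // mulrAC ltr_pdivrMr //.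
  have -> : P%:R * `|ad_inf a| = X * (eps / 2) by rewrite /X; field; rewrite gt_eqF.
  by rewrite mulrC ltr_pM2l // divr_gt0.
have [k [hk1 hk2]] := real_approx (ratr q' * ad_inf a) (ad_inf c) h0 hh.
set qk := fun k : int => q' + P%:R * (k%:~R / T%:R).
have Eqk : forall k : int, ratr (qk k) * ad_inf a = ratr q' * ad_inf a + k%:~R * h.
  move=> k'; rewrite /qk /h rmorphD rmorphM /= fmorph_div /= ratr_int !ratr_nat.
  rewrite hr; ring.
have pnes : forall p : prime_t, ~ qp_is0 (ad_fin a p) -> (val p <= B)%N -> val p != val s.
  move=> p hp hpB; apply/eqP => e.
  case: hs => [hs0|[hsB _]].
    by apply: hp; have -> : p = s by apply: val_inj.
  by move: hsB; rewrite -e ltnNge hpB.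
have Good : forall k : int, forall p, (val p <= B)%N -> Gd p (qk k).
  move=> k' p hpB y hy.
  case: (classic (qp_is0 (ad_fin a p))) => hp0.
    exact: (target_is0 (ppr p) n hp0 (Z1 p hp0) hy).
  have hin : p \in l by rewrite inl.
  exact: (HG p hin _ (pZ_frac k' j (pnes p hp0 hpB)) y hy).
have Out : forall k : int, forall p : prime_t, (B < val p)%N -> exists K,
    pZ (val p) 0 (qk k * (val p ^ K)%N%:R) /\ qp_ball (ad_fin a p) K 0.
  move=> k' p hpB.
  case: (classic (qp_is0 (ad_fin a p))) => hp0.
    have [K hK] := pZ_bound (ppr p) (qk k'); exists K; split => //.
    exact: (is0_ball (ppr p) hp0).
  case: (eqVneq (val p) (val s)) => hps; last first.
    exists 0%N; split; last exact: aint.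
    rewrite expn0 mulr1; apply: (pZD (ppr p) (q'out p hpB)).
    by apply: (pZ_mul0 (ppr p) (pZ_nat (ppr p) _)); apply: pZ_frac.
  have eps_ : p = s by apply: val_inj.
  subst p.
  case: hs => [//|[_ [hb1 ej]]].
  exists 1%N; split => //.
  have -> : qk k' * (val s ^ 1)%N%:R = q' * (val s ^ 1)%N%:R + P%:R * k'%:~R.
    have hs0 : ((val s)%:R : rat) != 0 by rewrite pnatr_eq0 -lt0n prime_gt0 // (ppr s).
    rewrite /qk /T ej expn1; field; by rewrite hs0.
  apply: (pZD (ppr s)); first by apply: (pZ_mul0 (ppr s) (q'out s hpB)); exact: (pZ_nat (ppr s)).
  by apply: (pZ_mul0 (ppr s) (pZ_nat (ppr s) _)); apply: (pZ_int (ppr s)).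
case: (eqVneq (qk k) 0) => hq0.
  apply: (finish (qk (k + 1))).
  - have -> : qk (k + 1) = qk k + P%:R / T%:R by rewrite /qk rmorphD /=; ring.
    by rewrite hq0 add0r mulf_neq0 // invr_eq0.
  - exact: Good.
  - exact: Out.
  - by rewrite Eqk.
apply: (finish (qk k)) => //; first exact: Good; first exact: Out.
by rewrite Eqk.
Qed.

End Dense.

Unset Implicit Arguments. Set Strict Implicit.

Theorem proposition3p3 (R : realType) (a : adele R) :
  (ad_invertible a ->
     forall b : adele R, quasi_orbit a b <-> ad_orbit a b) /\
  (~ ad_invertible a ->
     forall b : adele R, quasi_orbit a b <->
       (~ ad_invertible b /\
        (forall p : prime_t, qp_is0 (ad_fin b p) <-> qp_is0 (ad_fin a p)) /\
        (ad_inf b = 0 <-> ad_inf a = 0))).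
Proof.
split.
  move=> ha b; split; last exact: quasi_of_orbit.
  move=> hq.
  have hb : ad_closure (ad_orbit a) b by apply/(hq b); apply: closure_self; apply: orbit_refl.
  exact: closed_orbit ha hb.
move=> na b; split.
  move=> hq.
  have hab : ad_closure (ad_orbit b) a by apply/(hq a); apply: closure_self; apply: orbit_refl.
  have hba : ad_closure (ad_orbit a) b by apply/(hq b); apply: closure_self; apply: orbit_refl.
  have [Zb1 Zb2] := closure_Z hab.
  have [Za1 Za2] := closure_Z hba.
  split.
    move=> hbinv; apply: na; exact: inv_of_orbit (closed_orbit hbinv hab) hbinv.
  split; first by move=> p; split; [exact: Zb1|exact: Za1].
  by split; [exact: Zb2|exact: Za2].
move=> [nb [hz hi]] c; split.
  move=> hc; apply: dense na _; have [Z1 Z2] := closure_Z hc.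
  by split => [p h|h]; [apply: Z1; apply/hz | apply: Z2; apply/hi].
move=> hc; apply: dense nb _; have [Z1 Z2] := closure_Z hc.
by split => [p h|h]; [apply: Z1; apply/hz | apply: Z2; apply/hi].
Qed.
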